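(* If $I$ is a finite set of positive integers and $i\in I$, then $d(I;i)=0$, where $d(I;z)$ is the descent polynomial evaluated at $z=i$.
   Context: For a finite set $I$ of positive integers with $m=\max(I\cup\{0\})$ and $n>m$, $d(I;n)$ is the number of permutations $\pi\in\mathfrak S_n$ with $\{j\mid\pi_j>\pi_{j+1}\}=I$; this is a polynomial in $n$, and $d(I;z)$ denotes the polynomial evaluated at an arbitrary complex number $z$. *)

(* Defs.v *)
From HB Require Import structures.
From mathcomp Require Import all_boot all_order all_algebra all_fingroup.
Set Implicit Arguments. Unset Strict Implicit. Unset Printing Implicit Defensive.
Import GRing.Theory Num.Theory.

(* One-line (0-indexed) value of a permutation of 'I_n at nat position k
   (0 if k >= n, never used there). *)
Definition pval n (s : 'S_n) (k : nat) : nat :=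
  if insub k is Some o then val (s o) else 0.

(* j (1-indexed, 1 <= j <= n-1) is a descent of s, i.e. pi_j > pi_{j+1}
   where pi_j = s (j-1) in 0-indexed terms. *)
Definition is_desc n (s : 'S_n) (j : nat) : bool :=
  [&& 0 < j, j < n & pval s j < pval s j.-1].

Definition desc_set_eq n (s : 'S_n) (I : seq nat) : bool :=
  all (fun x => x < n) I && [forall j : 'I_n, is_desc s j == (val j \in I)].

Definition dcount (I : seq nat) (n : nat) : nat :=
  #|[set s : 'S_n | desc_set_eq s I]|.

Definition maxI (I : seq nat) : nat := \max_(x <- I) x.

(* Main.v *)
From Pilot Require Import Defs.
From HB Require Import structures.
From mathcomp Require Import all_boot all_order all_algebra all_fingroup.
From mathcomp Require Import lra.
Import Pilot.Defs.
Set Implicit Arguments. Unset Strict Implicit. Unset Printing Implicit Defensive.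


Lemma enum_sorted n (A : {set 'I_n}) : sorted ltn (map val (enum A)).
Proof.
rewrite -deprecated_filter_index_enum sorted_map.
apply: sorted_filter; first by move=> x y z; apply: ltn_trans.
have -> : index_enum 'I_n = enum 'I_n by rewrite enumT.
rewrite -sorted_map val_enum_ord; exact: iota_ltn_sorted.
Qed.

Lemma nth_enum_lt n (A : {set 'I_n}) d a b : a < #|A| -> b < #|A| ->
  (val (nth d (enum A) a) < val (nth d (enum A) b)) = (a < b).
Proof.
move=> ha hb.
have H : forall a b, a < #|A| -> b < #|A| -> a < b ->
   val (nth d (enum A) a) < val (nth d (enum A) b).
  move=> a' b' ha' hb' hab.
  have sz : size (enum A) = #|A| by rewrite cardE.
  rewrite -!(nth_map d (val d) val) ?sz //.
  apply: (sorted_ltn_nth ltn_trans); first exact: enum_sorted.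
  - by rewrite inE size_map sz.
  - by rewrite inE size_map sz.
  - exact: hab.
case: (ltngtP a b) => h; first exact: H.
  by apply/negbTE; rewrite -leqNgt ltnW //; apply: H.
by rewrite h ltnn.
Qed.

Lemma pval_ord k (t : 'S_k) (o : 'I_k) : pval t o = t o.
Proof. by rewrite /pval; case: insubP => [u _ /val_inj -> //|]; rewrite ltn_ord. Qed.

Lemma pvalOrd k (t : 'S_k) x (hx : x < k) : pval t x = t (Ordinal hx).
Proof. by rewrite -[x]/(nat_of_ord (Ordinal hx)) pval_ord. Qed.

Lemma pval_lt k (t : 'S_k) x : x < k -> pval t x < k.
Proof. by move=> hx; rewrite (pvalOrd t hx). Qed.

Lemma pval_inj k (t : 'S_k) x y : x < k -> y < k -> pval t x = pval t y -> x = y.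
Proof.
move=> hx hy; rewrite (pvalOrd t hx) (pvalOrd t hy) => /val_inj /perm_inj.
by move/(congr1 val).
Qed.


Definition psi n k (A : {set 'I_n}) (t : 'S_k) (r : 'S_(n-k)) (x : 'I_n) : 'I_n :=
  if #|A| == k then
    (if x < k then nth x (enum A) (pval t x) else nth x (enum (~:A)) (pval r (x - k)))
  else x.

Lemma cardC_k n k (A : {set 'I_n}) : #|A| = k -> #|~:A| = n - k.
Proof. by move=> hA; rewrite cardsCs setCK card_ord hA. Qed.

Lemma psi_small n k (A : {set 'I_n}) (t : 'S_k) (r : 'S_(n-k)) (x : 'I_n) (d : 'I_n) : #|A| = k -> x < k ->
  psi A t r x = nth d (enum A) (pval t x) /\ nth d (enum A) (pval t x) \in A
  /\ pval t x < size (enum A).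
Proof.
move=> hA hx; have hs : pval t x < size (enum A) by rewrite -cardE hA pval_lt.
rewrite /psi hA eqxx hx (set_nth_default d) //; split=> //; split=> //.
by rewrite -mem_enum mem_nth.
Qed.

Lemma psi_big n k (A : {set 'I_n}) (t : 'S_k) (r : 'S_(n-k)) (x : 'I_n) (d : 'I_n) : #|A| = k -> k <= x ->
  psi A t r x = nth d (enum (~:A)) (pval r (x - k)) /\
  nth d (enum (~:A)) (pval r (x - k)) \in ~:A
  /\ pval r (x - k) < size (enum (~:A)).
Proof.
move=> hA hx.
have hs : pval r (x - k) < size (enum (~:A)).
  by rewrite -cardE (cardC_k hA) pval_lt // ltn_sub2r // (leq_ltn_trans hx).
rewrite /psi hA eqxx ltnNge hx /= (set_nth_default d) //; split=> //; split=> //.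
by rewrite -mem_enum mem_nth.
Qed.

Lemma psi_inj n k (A : {set 'I_n}) (t : 'S_k) (r : 'S_(n-k)) : injective (@psi n k A t r).
Proof.
move=> x y; case hA: (#|A| == k); last by rewrite /psi hA.
move/eqP: hA => hA.
case: (ltnP x k) => hx; case: (ltnP y k) => hy.
- have [-> [_ h1]] := psi_small (x:=x) t r x hA hx.
  have [-> [_ h2]] := psi_small (x:=y) t r x hA hy.
  move/eqP; rewrite nth_uniq ?enum_uniq // => /eqP /pval_inj h.
  by apply/val_inj/h.
- have [-> [i1 _]] := psi_small (x:=x) t r x hA hx.
  have [-> [i2 _]] := psi_big (x:=y) t r x hA hy.
  by move=> e; move: i2; rewrite -e in_setC i1.
- have [-> [i1 _]] := psi_big (x:=x) t r x hA hx.
  have [-> [i2 _]] := psi_small (x:=y) t r x hA hy.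
  by move=> e; move: i1; rewrite in_setC e i2.
- have [-> [_ h1]] := psi_big (x:=x) t r x hA hx.
  have [-> [_ h2]] := psi_big (x:=y) t r x hA hy.
  move/eqP; rewrite nth_uniq ?enum_uniq // => /eqP /pval_inj h.
  apply/val_inj; move: h.
  have hn : forall z : 'I_n, z - k < n - k.
    by move=> z; rewrite ltn_sub2r // (leq_ltn_trans hx).
  move=> /(_ (hn x) (hn y)) /eqP; rewrite eqn_sub2rE //.
  by move/eqP.
Qed.

Definition Psi n k (u : {set 'I_n} * 'S_k * 'S_(n-k)) : 'S_n :=
  perm (@psi_inj n k u.1.1 u.1.2 u.2).


Lemma pval_surj k (t : 'S_k) j : j < k -> exists2 x, x < k & pval t x = j.
Proof.
move=> hj; exists (val ((t^-1)%g (Ordinal hj))); first exact: ltn_ord.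
by rewrite pval_ord permKV.
Qed.

Lemma card_le n (A : {set 'I_n}) : #|A| <= n.
Proof. by rewrite -[X in _ <= X]card_ord max_card. Qed.

Lemma memA n k (A : {set 'I_n}) (t : 'S_k) (r : 'S_(n-k)) y : #|A| = k ->
  (y \in A) = [exists x : 'I_n, (x < k) && (psi A t r x == y)].
Proof.
move=> hA; apply/idP/existsP.
- move=> yA; have hi : index y (enum A) < k by rewrite -hA cardE index_mem mem_enum.
  have [x hx ex] := pval_surj t hi.
  have hxn : x < n by apply: (leq_trans hx); rewrite -hA; exact: card_le.
  exists (Ordinal hxn); rewrite hx /=.
  have [-> _] := psi_small (x:=(Ordinal hxn)) t r y hA hx.
  by rewrite /= ex nth_index // mem_enum.
- case=> x /andP [hx /eqP <-].
  by have [-> [h _]] := psi_small (x:=x) t r x hA hx.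
Qed.

Lemma Psi_inj n k (hk : k <= n) :
  {in [set u : {set 'I_n} * 'S_k * 'S_(n-k) | #|u.1.1| == k] &, injective (@Psi n k)}.
Proof.
move=> [[A1 t1] r1] [[A2 t2] r2]; rewrite !inE /= => /eqP h1 /eqP h2 e.
have e' : forall x, psi A1 t1 r1 x = psi A2 t2 r2 x.
  by move=> x; move: (congr1 (fun s : 'S_n => s x) e); rewrite /Psi !permE.
have eA : A1 = A2.
  apply/setP=> y; rewrite (memA t1 r1 y h1) (memA t2 r2 y h2).
  by apply: eq_existsb => x; rewrite e'.
subst A2.
have et : t1 = t2.
  apply/permP=> o; apply/val_inj.
  have hx : widen_ord hk o < k by rewrite /= ltn_ord.
  move: (e' (widen_ord hk o)).
  have [-> [_ s1]] := psi_small (x:=(widen_ord hk o)) t1 r1 (widen_ord hk o) h1 hx.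
  have [-> [_ s2]] := psi_small (x:=(widen_ord hk o)) t2 r2 (widen_ord hk o) h1 hx.
  move/eqP; rewrite nth_uniq ?enum_uniq // => /eqP.
  by rewrite /= !pval_ord.
subst t2.
have er : r1 = r2.
  apply/permP=> o; apply/val_inj.
  have ho : k + o < n by rewrite -ltn_subRL ltn_ord.
  have hx : k <= Ordinal ho by rewrite /= leq_addr.
  move: (e' (Ordinal ho)).
  have [-> [_ s1]] := psi_big (x:=(Ordinal ho)) t1 r1 (Ordinal ho) h1 hx.
  have [-> [_ s2]] := psi_big (x:=(Ordinal ho)) t1 r2 (Ordinal ho) h1 hx.
  move/eqP; rewrite nth_uniq ?enum_uniq // => /eqP.
  by rewrite /= addKn !pval_ord.
by rewrite er.
Qed.

Lemma pval_Psi n k (u : {set 'I_n} * 'S_k * 'S_(n-k)) j (hj : j < n) :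
  pval (Psi u) j = psi u.1.1 u.1.2 u.2 (Ordinal hj).
Proof. by rewrite (pvalOrd _ hj) /Psi permE. Qed.

Lemma desc_lt n k (u : {set 'I_n} * 'S_k * 'S_(n-k)) j :
  #|u.1.1| = k -> 0 < j -> j < k -> is_desc (Psi u) j = is_desc u.1.2 j.
Proof.
case: u => [[A t] r] /= hA j0 jk.
have jn : j < n by apply: (leq_trans jk); rewrite -hA; exact: card_le.
have jk' : j.-1 < k by apply: leq_ltn_trans jk; exact: leq_pred.
have jn' : j.-1 < n by apply: leq_ltn_trans jn; exact: leq_pred.
rewrite /is_desc j0 jn jk /= (pval_Psi _ jn) (pval_Psi _ jn') /=.
have [-> [_ s1]] := psi_small (x:=(Ordinal jn)) t r (Ordinal jn) hA jk.
have [-> [_ s2]] := psi_small (x:=(Ordinal jn')) t r (Ordinal jn) hA jk'.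
by rewrite nth_enum_lt // hA pval_lt.
Qed.

Lemma desc_gt n k (u : {set 'I_n} * 'S_k * 'S_(n-k)) j :
  #|u.1.1| = k -> k < j -> is_desc (Psi u) j = is_desc u.2 (j - k).
Proof.
case: u => [[A t] r] /= hA kj.
rewrite /is_desc subn_gt0 kj /=.
case: (ltnP j n) => jn; last first.
  have h2 : (j - k < n - k) = false by rewrite ltnNge leq_sub2r.
  by rewrite h2 /= andbF.
have -> : j - k < n - k by rewrite ltn_sub2r // (ltn_trans kj jn).
have jn' : j.-1 < n by apply: leq_ltn_trans jn; exact: leq_pred.
have kj' : k <= j.-1 by rewrite -ltnS prednK // (leq_ltn_trans _ kj).
rewrite (pval_Psi _ jn) (pval_Psi _ jn') /=.
have [-> [_ s1]] := psi_big (x:=(Ordinal jn)) t r (Ordinal jn) hA (ltnW kj).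
have [-> [_ s2]] := psi_big (x:=(Ordinal jn')) t r (Ordinal jn) hA kj'.
rewrite nth_enum_lt -?cardE //=; [|by rewrite cardE|by rewrite cardE].
have -> : (j - k).-1 = j.-1 - k by rewrite -!subn1 -!subnDA addnC.
by have -> : 0 < j by apply: leq_ltn_trans kj.
Qed.


Lemma nodesc_id m (r : 'S_m) : (forall j : 'I_m, ~~ is_desc r j) -> r = 1%g.
Proof.
move=> H.
have ge : forall x, x < m -> x <= pval r x.
  elim=> [|x IH] hx //.
  have hx' : x < m by apply: ltnW.
  have := H (Ordinal hx); rewrite /is_desc /= hx /= -leqNgt => le.
  have ne : pval r x.+1 != pval r x.
    apply/eqP => /(pval_inj hx hx') e; by move: (ltnSn x); rewrite -{1}e ltnn.
  by apply: leq_ltn_trans (IH hx') _; rewrite ltn_neqAle eq_sym ne.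
have ge' : forall x : 'I_m, x <= r x by move=> x; rewrite -pval_ord ge.
have S : \sum_(x : 'I_m) (val (r x) - val x) = 0.
  rewrite sumnB; last by move=> i _; exact: ge'.
  by rewrite [X in _ - X](reindex_inj (@perm_inj _ r)) subnn.
apply/permP=> x; rewrite perm1; apply/val_inj/eqP.
rewrite eqn_leq ge' andbT -subn_eq0.
by move/eqP: S; rewrite sum_nat_eq0 => /forallP /(_ x).
Qed.

Lemma desc1 m j : ~~ is_desc (1%g : 'S_m) j.
Proof.
rewrite /is_desc; apply/negP => /and3P [j0 jm].
have jm' : j.-1 < m by apply: leq_ltn_trans jm; exact: leq_pred.
rewrite (pvalOrd _ jm) (pvalOrd _ jm') !perm1 /=.
by rewrite ltnNge leq_pred.
Qed.

Definition adesc n (P : pred nat) :=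
  #|[set s : 'S_n | [forall j : 'I_n, is_desc s j ==> P j]]|.

Lemma count_split n k (P : pred nat) : k <= n -> (forall j, P j -> j <= k) ->
  (0 < k -> P k) -> adesc n P = 'C(n, k) * adesc k P.
Proof.
move=> hk Pk Pkk.
set D := [set u : {set 'I_n} * 'S_k * 'S_(n-k) | #|u.1.1| == k].
have cD : #|D| = n`!.
  have -> : D = setX (setX [set A : {set 'I_n} | #|A| == k] [set: 'S_k]) [set: 'S_(n-k)].
    by apply/setP => [[[A t] r]]; rewrite /D !inE /= !andbT.
  rewrite cardsX; rewrite cardsX card_draws !cardsT !card_Sn card_ord -mulnA bin_fact //.
have allP : forall s : 'S_n, s \in [set Psi u | u in D].
  move=> s; suff -> : [set Psi u | u in D] = setT by rewrite inE.
  apply/eqP; rewrite eqEcard subsetT /= cardsT card_Sn.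
  by rewrite card_in_imset ?cD //; apply: Psi_inj.
set T := [set t : 'S_k | [forall j : 'I_k, is_desc t j ==> P j]].
set D' := [set u : {set 'I_n} * 'S_k * 'S_(n-k) |
            [&& #|u.1.1| == k, u.1.2 \in T & u.2 == 1%g]].
have sD : D' \subset D by apply/subsetP => u; rewrite !inE => /andP [].
have eX : [set s : 'S_n | [forall j : 'I_n, is_desc s j ==> P j]] = [set Psi u | u in D'].
  apply/setP => s; apply/idP/idP.
  - have /imsetP [[[A t] r] uD ->] := allP s.
    rewrite inE => /forallP Hs.
    move: uD; rewrite inE /= => /eqP hA.
    apply/imsetP; exists (A, t, r) => //; rewrite inE /= hA eqxx /=.
    apply/andP; split.
      rewrite inE; apply/forallP => j; apply/implyP => dj.
      have [j0 jk] : 0 < j /\ j < k by move: dj; rewrite /is_desc => /and3P [].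
      have jn : j < n by apply: leq_trans hk.
      have := Hs (Ordinal jn); rewrite /= (desc_lt (u:=(A,t,r))) //= dj.
      by [].
    apply/eqP/nodesc_id => j; apply/negP => dj.
    have [j0 jk] : 0 < j /\ j < n - k by move: dj; rewrite /is_desc => /and3P [].
    have jn : k + j < n by rewrite -ltn_subRL.
    have := Hs (Ordinal jn); rewrite /= (desc_gt (u:=(A,t,r))) //=; last first.
      by rewrite -addn1 leq_add2l.
    rewrite addKn dj /= => /Pk.
    have : k < k + j by rewrite -addn1 leq_add2l.
    by rewrite ltnNge => /negbTE ->.
  - case/imsetP => [[[A t] r]]; rewrite !inE /= => /andP [/eqP hA /andP [tT /eqP r1]] ->.
    subst r.
    apply/forallP => j; apply/implyP => dj.
    have j0 : 0 < j by move: dj; rewrite /is_desc => /and3P [].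
    case: (ltngtP j k) => jk.
    + move: dj; rewrite (desc_lt (u:=(A,t,1%g))) //= => dj.
      by move: tT => /forallP /(_ (Ordinal jk)) /implyP; apply.
    + move: dj; rewrite (desc_gt (u:=(A,t,1%g))) //=.
      by rewrite (negbTE (desc1 _ _)).
    + by rewrite jk; apply: Pkk; rewrite -jk.
rewrite /adesc eX card_in_imset; last first.
  by move=> x y xD yD; apply: Psi_inj => //; apply: (subsetP sD).
have -> : D' = setX (setX [set A : {set 'I_n} | #|A| == k] T) [set 1%g].
  by apply/setP => [[[A t] r]]; rewrite !inE /= andbA.
by rewrite !cardsX card_draws cards1 muln1 card_ord.
Qed.

Import GRing.Theory Num.Theory.

Lemma sum_invol (T : finType) (P : pred T) (F : T -> rat) (g : T -> T) :
  involutive g -> (forall x, P (g x) = P x) -> (forall x, P x -> F (g x) = (- F x)%R) ->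
  (\sum_(x | P x) F x = 0)%R.
Proof.
move=> ig Pg Fg.
have e : (\sum_(x | P x) F x = \sum_(x | P x) (- F x))%R.
  rewrite (reindex_inj (inv_inj ig)) /=.
  by apply: eq_big => [x|x]; rewrite Pg //; apply: Fg.
move: e; rewrite sumrN; set s := (\sum_(x | P x) F x)%R => e.
lra.
Qed.

Definition tog (T : finType) (x : T) (S : {set T}) : {set T} :=
  if x \in S then S :\ x else x |: S.

Lemma tog_invol (T : finType) (x : T) : involutive (tog x).
Proof.
move=> S; rewrite /tog; case: (boolP (x \in S)) => xS.
  by rewrite !inE eqxx /= setD1K.
by rewrite !inE eqxx /= setU1K.
Qed.

Lemma tog_mem (T : finType) (x : T) S y : y != x -> (y \in tog x S) = (y \in S).
Proof. by move=> yx; rewrite /tog; case: ifP; rewrite !inE (negbTE yx). Qed.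

Lemma tog_sign (T : finType) (x : T) (C S : {set T}) : x \in C ->
  ((-1 : rat) ^+ #|C :\: tog x S| = - (-1) ^+ #|C :\: S|)%R.
Proof.
move=> xC; rewrite /tog; case: (boolP (x \in S)) => xS.
  have -> : C :\: (S :\ x) = x |: (C :\: S).
    apply/setP => y; rewrite !inE; case: (eqVneq y x) => [->|] /=.
      by rewrite xC.
    by [].
  by rewrite cardsU1 !inE xS /= exprS mulN1r.
have e : #|C :\: S| = (#|C :\: (x |: S)|).+1.
  rewrite (cardsD1 x (C :\: S)) !inE xS xC /= add1n; congr (_.+1).
  by apply: eq_card => y; rewrite !inE negb_or andbA.
by rewrite e exprS mulN1r opprK.
Qed.

Lemma sum_sign (T : finType) (B C : {set T}) : B \subset C ->
  (\sum_(S : {set T} | (B \subset S) && (S \subset C)) (-1 : rat) ^+ #|C :\: S|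
   = (B == C)%:R)%R.
Proof.
move=> BC; case: (eqVneq B C) => [<-|ne].
  rewrite (big_pred1 B) ?setDv ?cards0 ?expr0 //.
  by move=> S; rewrite -eqEsubset eq_sym.
have /set0Pn [x] : C :\: B != set0.
  apply: contra ne => h; rewrite eqEsubset BC /=; by rewrite -setD_eq0.
rewrite inE => /andP [xB xC].
apply: (@sum_invol _ _ _ (tog x)); first exact: tog_invol.
  move=> S; rewrite /tog; case: ifP => xS.
    congr andb; apply/subsetP/subsetP => H y yB.
    - by have := H y yB; rewrite !inE => /andP [].
    - rewrite !inE H // andbT; apply/eqP => eyx; by move: xB; rewrite -eyx yB.
    - case: (eqVneq y x) => [->//|nyx]; apply: H; by rewrite !inE nyx yB.
    - by move: yB; rewrite inE => /andP [_ yS]; apply: H.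
  congr andb; apply/subsetP/subsetP => H y yB.
  - have := H y yB; rewrite !inE => /orP [/eqP eyx|//].
    by move: xB; rewrite -eyx yB.
  - by rewrite inE H ?orbT.
  - by apply: H; rewrite inE yB orbT.
  - by move: yB; rewrite !inE => /orP [/eqP ->|]; [|apply: H].
by move=> S _; rewrite tog_sign.
Qed.

Import GRing.Theory Num.Theory.

Definition I0 (I : seq nat) : {set 'I_(maxI I).+1} := [set x | val x \in I].
Definition PS m (S : {set 'I_m.+1}) : pred nat := fun j => (j <= m) && (inord j \in S).
Definition kS m (S : {set 'I_m.+1}) : nat := \max_(x in S) val x.

Lemma PS_le m (S : {set 'I_m.+1}) j : PS S j -> j <= kS S.
Proof.
case/andP=> jm jS.
by have := @leq_bigmax_cond _ (fun x => x \in S) (fun x : 'I_m.+1 => val x) _ jS; rewrite /= inordK // ltnS.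
Qed.

Lemma PS_max m (S : {set 'I_m.+1}) : 0 < kS S -> PS S (kS S).
Proof.
case: (set_0Vmem S) => [->|[x xS]].
  by rewrite /kS big_set0.
move=> _; have h0 : 0 < #|S| by apply/card_gt0P; exists x.
rewrite /kS; have [i0 i0S ->] := @eq_bigmax_cond _ (mem S) (fun x : 'I_m.+1 => val x) h0.
by rewrite /PS -ltnS ltn_ord inord_val.
Qed.

Lemma kS_le m (S : {set 'I_m.+1}) : kS S <= m.
Proof. by apply/bigmax_leqP => x _; rewrite -ltnS ltn_ord. Qed.

Lemma eq_adesc n (P Q : pred nat) : (forall j, j < n -> P j = Q j) ->
  adesc n P = adesc n Q.
Proof.
move=> H; rewrite /adesc; apply: eq_card => s; rewrite !inE.
by apply: eq_forallb => j; rewrite H.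
Qed.

Lemma cardR (T : finType) (Q : pred T) :
  ((#|[set x | Q x]|)%:R : rat) = (\sum_x (Q x)%:R)%R.
Proof.
rewrite -sum1_card natr_sum big_mkcond /=; apply: eq_bigr => x _.
by rewrite inE; case: (Q x).
Qed.

Lemma maxI_ge (I : seq nat) x : x \in I -> x <= maxI I.
Proof. by move=> xI; rewrite /maxI (leq_bigmax_seq (F := id) x xI). Qed.

Lemma IE (I : seq nat) n : maxI I < n ->
  ((dcount I n)%:R : rat) =
  (\sum_(S : {set 'I_(maxI I).+1} | S \subset I0 I)
     (-1) ^+ #|I0 I :\: S| * (adesc n (PS S))%:R)%R.
Proof.
move=> hn; set m := maxI I.
rewrite /dcount cardR.
under [in RHS]eq_bigr => S _ do rewrite /adesc cardR mulr_sumr.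
rewrite exchange_big /=; apply: eq_bigr => s _.
set Ds := [set x : 'I_m.+1 | is_desc s x].
set Es := [forall j : 'I_n, is_desc s j ==> (j <= m)].
have xn : forall x : 'I_m.+1, x < n by move=> x; apply: leq_trans hn; exact: ltn_ord.
have c1 : forall S : {set 'I_m.+1},
    [forall j : 'I_n, is_desc s j ==> PS S j] = Es && (Ds \subset S).
  move=> S; apply/forallP/andP.
  - move=> H; split.
      apply/forallP => j; apply/implyP => dj.
      by have := H j; rewrite dj => /andP [].
    apply/subsetP => x; rewrite inE => dx.
    have := H (Ordinal (xn x)); rewrite /= dx /= => /andP [_].
    by rewrite inord_val.
  - case=> /forallP E /subsetP D j; apply/implyP => dj.
    have jm : j <= m by have := E j; rewrite dj.
    rewrite /PS jm /=; apply: D; rewrite inE inordK //.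
have c2 : desc_set_eq s I = Es && (Ds == I0 I).
  rewrite /desc_set_eq.
  have -> : all (fun x => x < n) I.
    by apply/allP => x xI; apply: leq_ltn_trans hn; exact: maxI_ge.
  rewrite /=; apply/forallP/andP.
  - move=> H; split.
      apply/forallP => j; apply/implyP => dj.
      by have := H j; rewrite dj eq_sym => /eqP /maxI_ge.
    apply/eqP/setP => x; rewrite !inE.
    by have := H (Ordinal (xn x)); move/eqP.
  - case=> /forallP E /eqP D j; apply/eqP.
    case: (leqP j m) => jm.
      have : inord j \in Ds = (inord j \in I0 I) by rewrite D.
      by rewrite /Ds /I0 !inE /= inordK // ltnS.
    have := E j; rewrite leqNgt jm implybF => /negbTE ->.
    by apply/esym/negbTE; apply: contraTN jm => /maxI_ge; rewrite -leqNgt.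
rewrite c2; under eq_bigr => S _ do rewrite c1.
case: (boolP Es) => es /=; last first.
  by rewrite big1 // => S _; rewrite mulr0.
have -> : (\sum_(S : {set 'I_m.+1} | S \subset I0 I) (-1) ^+ #|I0 I :\: S| * (Ds \subset S)%:R =
    \sum_(S : {set 'I_m.+1} | (Ds \subset S) && (S \subset I0 I)) (-1) ^+ #|I0 I :\: S| :> rat)%R.
  rewrite big_mkcond [in RHS]big_mkcond; apply: eq_bigr => S _.
  by case: (S \subset I0 I); case: (Ds \subset S); rewrite /= ?mulr1 ?mulr0 ?andbF.
case: (boolP (Ds \subset I0 I)) => DI.
  by rewrite sum_sign.
rewrite big_pred0; last first.
  move=> S; apply/negbTE; apply: contra DI => /andP [SI DS].
  exact: subset_trans SI DS.
by case: eqP => // eD; move: DI; rewrite eD subxx.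
Qed.

Import GRing.Theory Num.Theory.
Local Open Scope ring_scope.

Definition bp (k : nat) : {poly rat} :=
  ((k`!%:R)^-1 *: \prod_(t < k) ('X - (t%:R)%:P))%R.

Lemma prod_ffact k n : (\prod_(t < k) ((n%:R : rat) - t%:R) = (n ^_ k)%:R)%R.
Proof.
elim: k => [|k IH]; first by rewrite big_ord0 ffactn0.
rewrite big_ord_recr /= IH ffactnSr natrM.
case: (leqP k n) => hkn; first by rewrite natrB //.
by rewrite ffact_small // !mul0r.
Qed.

Lemma bp_eval k n : (bp k).[n%:R] = ('C(n, k)%:R : rat).
Proof.
rewrite /bp hornerZ horner_prod.
under eq_bigr => t _ do rewrite hornerXsubC.
rewrite prod_ffact -bin_ffact natrM [('C(n, k)%:R * _)]mulrC mulKf //.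
by rewrite pnatr_eq0 -lt0n fact_gt0.
Qed.

Lemma poly_inf (r : {poly rat}) m : (forall n, (m < n)%N -> r.[n%:R] = 0%R) -> r = 0%R.
Proof.
move=> H; apply/eqP; apply/negP => /negP rn.
set rs := [seq (m.+1 + t)%:R | t <- iota 0 (size r)] : seq rat.
have A1 : all (root r) rs.
  apply/allP => x /mapP [t _ ->]; rewrite /root H //.
  by rewrite ltnS leq_addr.
have U : uniq rs.
  rewrite map_inj_uniq ?iota_uniq // => a b /eqP; rewrite eqr_nat eqn_add2l.
  by move/eqP.
by have := max_poly_roots rn A1 U; rewrite size_map size_iota ltnn.
Qed.

Lemma tog_sub (T : finType) (x : T) (C S : {set T}) : x \in C ->
  (tog x S \subset C) = (S \subset C).
Proof.
move=> xC; apply/subsetP/subsetP => H y yS.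
- case: (eqVneq y x) => [->//|nyx]; apply: H; by rewrite tog_mem.
- case: (eqVneq y x) => [->//|nyx]; apply: H; by rewrite -(tog_mem S nyx).
Qed.

Lemma kS_tog m (x : 'I_m.+1) (S : {set 'I_m.+1}) i : (x <= i)%N ->
  (kS (tog x S) <= i)%N = (kS S <= i)%N.
Proof.
move=> xi; apply/bigmax_leqP/bigmax_leqP => H y yS.
- case: (eqVneq y x) => [->//|nyx]; apply: H; by rewrite tog_mem.
- case: (eqVneq y x) => [->//|nyx]; apply: H; by rewrite -(tog_mem S nyx).
Qed.

Lemma Bval m (S : {set 'I_m.+1}) i :
  ('C(i, kS S) * adesc (kS S) (PS S) = if kS S <= i then adesc i (PS S) else 0)%N.
Proof.
case: leqP => h; last by rewrite bin_small.
by rewrite (count_split (n:=i) (k:=kS S) (P:=PS S) h (@PS_le _ S) (@PS_max _ S)).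
Qed.

Unset Implicit Arguments.
Theorem theorem4p1 (I : seq nat) (HI : all (fun x => (0 < x)%N) I)
  (p : {poly rat})
  (Hp : forall n : nat, (maxI I < n)%N -> p.[n%:R] = (dcount I n)%:R)
  (i : nat) (Hi : i \in I) :
  p.[i%:R] = 0%R.
Proof.
set m := maxI I.
pose q : {poly rat} := (\sum_(S : {set 'I_m.+1} | S \subset I0 I)
   ((-1) ^+ #|I0 I :\: S| * (adesc (kS S) (PS S))%:R) *: bp (kS S))%R.
have qE : forall n, q.[n%:R] = (\sum_(S : {set 'I_m.+1} | S \subset I0 I)
   (-1) ^+ #|I0 I :\: S| * ('C(n, kS S) * adesc (kS S) (PS S))%:R)%R.
  move=> n; rewrite horner_sum; apply: eq_bigr => S _.
  by rewrite hornerZ bp_eval -mulrA -natrM mulnC.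
have pq : p = q.
  apply/eqP; rewrite -subr_eq0; apply/eqP/(poly_inf (m := m)) => n hn.
  rewrite hornerD hornerN Hp // qE IE //; apply/eqP; rewrite subr_eq0; apply/eqP.
  apply: eq_bigr => S _; rewrite Bval.
  by rewrite (leq_trans (kS_le S)) // ltnW.
have im : (i <= m)%N by exact: maxI_ge.
have iI0 : inord i \in I0 I by rewrite /I0 inE /= inordK // ltnS.
rewrite pq qE.
apply: (@sum_invol _ _ _ (tog (inord i))); first exact: tog_invol.
  by move=> S; rewrite tog_sub.
move=> S _; rewrite tog_sign // mulNr; congr (- (_ * _))%R; rewrite !Bval.
rewrite kS_tog ?inordK //; case: ifP => // _.
congr (_%:R)%R; apply: eq_adesc => j ji.
rewrite /PS; case: (leqP j m) => //= jm.
rewrite tog_mem //; apply/eqP => /(congr1 val); rewrite /= !inordK ?ltnS //.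
by move=> e; move: ji; rewrite e ltnn.
Qed.
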